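(* For $n\ge 0$ let $M_n=\bigoplus_{i\ge 0}C_{n,i}$, where $C_{n,i}=\mathbb{Q}$ for $i<n$ and $C_{n,i}=\mathbb{Q}/\mathbb{Z}$ for $i\ge n$. For $m\le n$ define $\varphi_{mn}:M_n\to M_m$ componentwise: as the identity on components with $i<m$ or $i\ge n$, and as the reduction map $\mathbb{Q}\to\mathbb{Q}/\mathbb{Z}$ on components with $m\le i<n$. Then each $M_n$ is an injective $\mathbb{Z}$-module, each $\varphi_{mn}$ is surjective, the inverse limit $M$ of the system $\cdots\to M_2\to M_1\to M_0$ is isomorphic to the subgroup of $\mathbb{Q}^\omega$ consisting of sequences all but finitely many of whose terms lie in $\mathbb{Z}$, and $M$ is not an injective $\mathbb{Z}$-module.
   Context: $\mathbb{Q}^\omega$ denotes the direct product of countably many copies of $\mathbb{Q}$. For $\mathbb{Z}$-modules, injective is equivalent to divisible. *)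

(* Defs.v *)
From HB Require Import structures.
From mathcomp Require Import all_boot all_order all_algebra.
Set Implicit Arguments. Unset Strict Implicit. Unset Printing Implicit Defensive.
Import Order.TTheory GRing.Theory Num.Theory.
Local Open Scope ring_scope.

(* An element of M_n = (+)_{i>=0} C_{n,i}  (C_{n,i} = Q for i < n,
   C_{n,i} = Q/Z for i >= n) is represented by a finitely supported sequence
   of rationals s : seq rat, whose i-th term (nth 0 s i) is a representative
   in Q of the i-th component.  Two representatives denote the same element of
   M_n iff they agree on components i < n and differ by an integer on the
   components i >= n. *)

Definition comp (s : seq rat) (i : nat) : rat := nth 0 s i.

Definition Meq (n : nat) (s t : seq rat) : Prop :=
  forall i : nat,
    if (i < n)%N then comp s i = comp t i
    else (comp s i - comp t i) \is a Num.int.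

Definition Madd (s t : seq rat) : seq rat :=
  mkseq (fun i => comp s i + comp t i) (maxn (size s) (size t)).
Definition Mzero : seq rat := [::].
Definition Mnmul (k : nat) (s : seq rat) : seq rat := map (fun q => q *+ k) s.

(* Injective Z-module = divisible Z-module (standing convention of the
   paper's context): every element is divisible by every positive integer. *)
Definition injective_M (n : nat) : Prop :=
  forall (x : seq rat) (k : nat), (0 < k)%N ->
    exists y : seq rat, Meq n (Mnmul k y) x.

(* On representatives in Q
   this is the identity map (the class of s in M_n goes to the class of s
   in M_m). *)
Definition phi (m n : nat) (s : seq rat) : seq rat := s.

Definition in_lim (x : nat -> seq rat) : Prop :=
  forall m n : nat, (m <= n)%N -> Meq m (phi m n (x n)) (x m).
Definition lim_eq (x y : nat -> seq rat) : Prop := forall n, Meq n (x n) (y n).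
Definition lim_add (x y : nat -> seq rat) : nat -> seq rat :=
  fun n => Madd (x n) (y n).
Definition lim_nmul (k : nat) (x : nat -> seq rat) : nat -> seq rat :=
  fun n => Mnmul k (x n).

Definition injective_lim : Prop :=
  forall (x : nat -> seq rat) (k : nat), in_lim x -> (0 < k)%N ->
    exists y, in_lim y /\ lim_eq (lim_nmul k y) x.

Definition ev_int (f : nat -> rat) : Prop :=
  exists N : nat, forall i : nat, (N <= i)%N -> f i \is a Num.int.

Definition lim_iso_ev_int (F : (nat -> seq rat) -> (nat -> rat)) : Prop :=
  [/\ forall x, in_lim x -> ev_int (F x),
      forall x y, in_lim x -> in_lim y -> lim_eq x y -> F x = F y,
      forall x y, in_lim x -> in_lim y ->
        F (lim_add x y) = (fun i => F x i + F y i),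
      forall x y, in_lim x -> in_lim y -> F x = F y -> lim_eq x y
    & forall f, ev_int f -> exists2 x, in_lim x & F x = f].

(* Main.v *)
From Pilot Require Import Defs.
From HB Require Import structures.
From mathcomp Require Import all_boot all_order all_algebra.
From Stdlib Require Import FunctionalExtensionality.
From mathcomp Require Import ring.
Import Order.TTheory GRing.Theory Num.Theory.

Local Notation comp := Pilot.Defs.comp.
Section H.
Local Open Scope ring_scope.

Lemma comp_Madd s t i : comp (Madd s t) i = comp s i + comp t i.
Proof. Local Open Scope ring_scope.
rewrite /comp /Madd; case: (ltnP i (maxn (size s) (size t))) => h.
  by rewrite nth_mkseq.
rewrite !nth_default ?addr0 ?size_mkseq //.
  by apply: leq_trans h; rewrite leq_maxr.
by apply: leq_trans h; rewrite leq_maxl.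
Qed.

Lemma comp_Mnmul k s i : comp (Mnmul k s) i = comp s i *+ k.
Proof. Local Open Scope ring_scope.
rewrite /comp /Mnmul; case: (ltnP i (size s)) => h.
  by rewrite (nth_map 0).
by rewrite !nth_default ?size_map // mul0rn.
Qed.

Lemma comp_mkseq f n i : comp (mkseq f n) i = if (i < n)%N then f i else 0.
Proof. Local Open Scope ring_scope.
rewrite /comp; case: ifP => h; first by rewrite nth_mkseq.
by rewrite nth_default // size_mkseq leqNgt h.
Qed.

Lemma in_lim_eq x m n i : in_lim x -> (m <= n)%N -> (i < m)%N ->
  comp (x n) i = comp (x m) i.
Proof. by move=> hx hmn him; have := hx m n hmn i; rewrite him. Qed.

Lemma in_lim_int x m n i : in_lim x -> (m <= n)%N -> (m <= i)%N ->
  comp (x n) i - comp (x m) i \is a Num.int.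
Proof. by move=> hx hmn him; have := hx m n hmn i; rewrite ltnNge him. Qed.

Arguments in_lim_int {x m n i}.
Arguments in_lim_eq {x m n i}.
Definition Fdef (x : nat -> seq rat) : nat -> rat := fun i => comp (x i.+1) i.

Lemma Fiso : lim_iso_ev_int Fdef.
Proof. Local Open Scope ring_scope.
split.
- move=> x hx; exists (size (x 0%N)) => i hi.
  have := in_lim_int (i:=i) hx (leq0n i.+1) (leq0n i).
  by rewrite /comp [nth 0 (x 0%N) i]nth_default // subr0.
- move=> x y hx hy hxy; apply: functional_extensionality => i.
  by have := hxy i.+1 i; rewrite ltnSn.
- move=> x y hx hy; apply: functional_extensionality => i.
  by rewrite /Fdef /lim_add comp_Madd.
- move=> x y hx hy hF n i.
  have hFi : comp (x i.+1) i = comp (y i.+1) i.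
    by have := congr1 (fun f => f i) hF.
  case: ifP => hin.
    rewrite (in_lim_eq (m:=i.+1) hx) // (in_lim_eq (m:=i.+1) hy) //.
  have hni : (n <= i)%N by rewrite leqNgt hin.
  have h1 := in_lim_int hx (leqW hni) hni.
  have h2 := in_lim_int hy (leqW hni) hni.
  have -> : comp (x n) i - comp (y n) i =
    (comp (y i.+1) i - comp (y n) i) - (comp (x i.+1) i - comp (x n) i).
    by rewrite hFi; ring.
  by rewrite rpredB.
- move=> f [N hN].
  exists (fun n => mkseq f (maxn n N)).
    move=> m n hmn i; rewrite /phi !comp_mkseq.
    case: ifP => him.
      have h1 : (i < maxn n N)%N by apply: leq_trans (leq_maxl _ _); apply: leq_trans hmn.
      have h2 : (i < maxn m N)%N by apply: leq_trans (leq_maxl _ _).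
      by rewrite h1 h2.
    case: (ltnP i (maxn m N)) => h2.
      have h1 : (i < maxn n N)%N.
        by apply: leq_trans h2 _; rewrite geq_max leq_maxr (leq_trans hmn) ?leq_maxl.
      by rewrite h1 subrr.
    case: ifP => _; last by rewrite subrr.
    rewrite subr0; apply: hN; apply: leq_trans h2; exact: leq_maxr.
  apply: functional_extensionality => i.
  by rewrite /Fdef comp_mkseq (leq_trans (ltnSn i) (leq_maxl _ _)).
Qed.

Lemma not_inj : ~ injective_lim.
Proof. Local Open Scope ring_scope.
move=> H.
have hx : in_lim (fun n => mkseq (fun _ => (1 : rat)) n).
  move=> m n hmn i; rewrite /phi !comp_mkseq.
  case: ifP => him; first by rewrite him (leq_trans him hmn).
  by rewrite him; case: ifP => _; rewrite ?subr0 ?subrr ?rpred1 ?rpred0.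
have [y [hy hyx]] := H _ 2%N hx isT.
set N := size (y 0%N).
have h1 := in_lim_int (i:=N) hy (leq0n N.+1) (leq0n N).
rewrite /comp [nth 0 (y 0%N) N]nth_default // subr0 in h1.
have h2 := hyx N.+1 N; rewrite ltnSn /lim_nmul comp_Mnmul comp_mkseq ltnSn in h2.
have e : nth 0 (y N.+1) N = 1/2.
  rewrite -{1}h2 mulr2n /Defs.comp; by field.
by rewrite e in h1.
Qed.

End H.

Theorem mainTheorem10 :
  [/\ (forall n : nat, injective_M n),
      (forall m n : nat, (m <= n)%N ->
         forall y : seq rat, exists x : seq rat, Meq m (phi m n x) y),
      (exists F, lim_iso_ev_int F)
    & ~ injective_lim].
Proof. Local Open Scope ring_scope.
split.
- move=> n x k hk; exists (map (fun q => q / k%:R) x) => i.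
  have -> : comp (Mnmul k (map (fun q => q / k%:R) x)) i = comp x i.
    rewrite comp_Mnmul /comp; case: (ltnP i (size x)) => h.
      rewrite (nth_map 0) // -(mulr_natr (x`_i / k%:R)) divfK //.
      by rewrite pnatr_eq0 -lt0n.
    by rewrite !nth_default ?size_map // mul0rn.
  by case: ifP => _; rewrite ?subrr.
- by move=> m n _ y; exists y => i; case: ifP => _; rewrite /phi ?subrr.
- by exists Fdef; exact: Fiso.
- exact: not_inj.
Qed.
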